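(* Let $X$ be a real Hilbert space, $\mathsf{A}:X\to 2^X$ maximal monotone with nonempty zero set $S$, $J:=(Id+\mathsf{A})^{-1}$, and let $(x_n)$ be generated by (HPPA) from $x_0\in X$ and sequences $(\alpha_n)\subset\,]0,1[$, $(\beta_n)\subset(0,\infty)$, $(e_n)\subset X$. Let ${\rm E}:\mathbb{N}\to\mathbb{N}$ be monotone satisfying (Q4), and let $\chi_1:\mathbb{N}\to\mathbb{N}$ be a monotone function such that $\forall k\in\mathbb{N}\,\forall n\geq\chi_1(k)\ \big(\|J(x_n)-x_n\|\leq\frac{1}{k+1}\big)$. Let $p\in S$ and $N\in\mathbb{N}$ with $N\geq\max\{2\|x_0-p\|,\ \|x_0-p\|+1+\sum_{i=0}^{{\rm E}(0)}\|e_i\|\}$. Then for every $k\in\mathbb{N}$ and every monotone $f:\mathbb{N}\to\mathbb{N}$ there exist $n\leq\psi_{N,\chi_1}(k,f)$ and $x\in B_N$ such that $$\|J(x)-x\|\leq\frac{1}{f(n)+1}\quad\text{and}\quad\forall i\geq n\ \left(\langle x_0-x,\,x_i-x\rangle\leq\frac{1}{k+1}\right),$$ where $\psi_{N,\chi_1}(k,f):=\chi_1\big(24N(w_{\hat f,N}^{(R)}(0)+1)^2\big)$, $R:=4N^4(k+1)^2$, $\hat f(m):=f(\chi_1(m))$ and $w_{g,N}(m):=\max\{g(24N(m+1)^2),\,24N(m+1)^2\}$.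
   Context: $S:=\{x\in X: 0\in\mathsf{A}(x)\}$; for $\beta>0$, $J_\beta:=(Id+\beta\mathsf{A})^{-1}$ is the resolvent, a single-valued nonexpansive map whose fixed point set is $S$. (HPPA): $x_{n+1}:=\alpha_n x_0+(1-\alpha_n)(J_{\beta_n}(x_n)+e_n)$. (Q4): ${\rm E}$ is a Cauchy rate for $\sum\|e_i\|$, i.e. $\forall k\,\forall n\ \sum_{i={\rm E}(k)+1}^{{\rm E}(k)+n}\|e_i\|\leq\frac{1}{k+1}$. $B_N:=\{x\in X:\|x-p\|\leq N\}$. A function $f:\mathbb{N}\to\mathbb{N}$ is monotone if $f(n)\leq f(n+1)$ for all $n$. $g^{(R)}$ denotes $R$-fold composition ($g^{(0)}$ the identity). *)

(* Defs.v *)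
From Stdlib Require Import Reals Lra Lia Arith.
Open Scope R_scope.

Record HilbertSpace := {
  hs_car :> Type;
  hs_zero : hs_car;
  hs_add : hs_car -> hs_car -> hs_car;
  hs_opp : hs_car -> hs_car;
  hs_scal : R -> hs_car -> hs_car;
  hs_inner : hs_car -> hs_car -> R;
  hs_add_assoc : forall x y z, hs_add x (hs_add y z) = hs_add (hs_add x y) z;
  hs_add_comm : forall x y, hs_add x y = hs_add y x;
  hs_add_zero : forall x, hs_add x hs_zero = x;
  hs_add_opp : forall x, hs_add x (hs_opp x) = hs_zero;
  hs_scal_one : forall x, hs_scal 1 x = x;
  hs_scal_assoc : forall a b x, hs_scal a (hs_scal b x) = hs_scal (a * b) x;
  hs_scal_distr_l : forall a x y, hs_scal a (hs_add x y) = hs_add (hs_scal a x) (hs_scal a y);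
  hs_scal_distr_r : forall a b x, hs_scal (a + b) x = hs_add (hs_scal a x) (hs_scal b x);
  hs_inner_sym : forall x y, hs_inner x y = hs_inner y x;
  hs_inner_add_l : forall x y z, hs_inner (hs_add x y) z = hs_inner x z + hs_inner y z;
  hs_inner_scal_l : forall a x y, hs_inner (hs_scal a x) y = a * hs_inner x y;
  hs_inner_pos : forall x, 0 <= hs_inner x x;
  hs_inner_def : forall x, hs_inner x x = 0 -> x = hs_zero;
  hs_complete : forall u : nat -> hs_car,
    (forall eps, 0 < eps -> exists M, forall m n, (M <= m)%nat -> (M <= n)%nat ->
        sqrt (hs_inner (hs_add (u m) (hs_opp (u n))) (hs_add (u m) (hs_opp (u n)))) < eps) ->
    exists l, forall eps, 0 < eps -> exists M, forall n, (M <= n)%nat ->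
        sqrt (hs_inner (hs_add (u n) (hs_opp l)) (hs_add (u n) (hs_opp l))) < eps
}.

Arguments hs_zero {h}.
Arguments hs_add {h}.
Arguments hs_opp {h}.
Arguments hs_scal {h}.
Arguments hs_inner {h}.

Definition hs_sub {X : HilbertSpace} (x y : X) : X := hs_add x (hs_opp y).
Definition hs_norm {X : HilbertSpace} (x : X) : R := sqrt (hs_inner x x).

(** Set-valued operator A : X -> 2^X, given by its graph: A x u means u ∈ A(x). *)
Definition monotone_op {X : HilbertSpace} (A : X -> X -> Prop) : Prop :=
  forall x y u v, A x u -> A y v -> 0 <= hs_inner (hs_sub x y) (hs_sub u v).

Definition maximal_monotone {X : HilbertSpace} (A : X -> X -> Prop) : Prop :=
  monotone_op A /\
  forall x u, (forall y v, A y v -> 0 <= hs_inner (hs_sub x y) (hs_sub u v)) -> A x u.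

(** J is the resolvent family: J b = (Id + b A)^{-1}, i.e. for b > 0,
    J b x = y  iff  x ∈ y + b A(y). *)
Definition is_resolvent {X : HilbertSpace} (A : X -> X -> Prop) (J : R -> X -> X) : Prop :=
  forall b, 0 < b -> forall x y : X,
    J b x = y <-> exists v, A y v /\ x = hs_add y (hs_scal b v).

Definition HPPA {X : HilbertSpace} (J : R -> X -> X) (x0 : X)
  (alpha beta : nat -> R) (e : nat -> X) (x : nat -> X) : Prop :=
  x 0%nat = x0 /\
  forall n, x (S n) = hs_add (hs_scal (alpha n) x0)
                        (hs_scal (1 - alpha n) (hs_add (J (beta n) (x n)) (e n))).

(** rsum f n = f 0 + ... + f (n-1). *)
Fixpoint rsum (f : nat -> R) (n : nat) : R :=
  match n with O => 0 | S m => rsum f m + f m end.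

Definition nat_monotone (f : nat -> nat) : Prop := forall n, (f n <= f (S n))%nat.

Definition w_fun (g : nat -> nat) (N : nat) (m : nat) : nat :=
  (Nat.max (g (24 * N * (m + 1) ^ 2)) (24 * N * (m + 1) ^ 2))%nat.

Definition psi (N : nat) (chi1 : nat -> nat) (k : nat) (f : nat -> nat) : nat :=
  let fhat := fun m => f (chi1 m) in
  let Rr := (4 * N ^ 4 * (k + 1) ^ 2)%nat in
  chi1 (24 * N * (Nat.iter Rr (w_fun fhat N) 0 + 1) ^ 2)%nat.

(* Main.v *)
Require Import Defs.
From Stdlib Require Import Reals Lra Lia Psatz Classical.
Open Scope R_scope.

Lemma inner_zero_l {X : HilbertSpace} (y : X) : hs_inner hs_zero y = 0.
Proof. pose proof (hs_inner_add_l X hs_zero hs_zero y) as H.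
  rewrite hs_add_zero in H. lra. Qed.

Lemma inner_opp_l {X : HilbertSpace} (x y : X) : hs_inner (hs_opp x) y = - hs_inner x y.
Proof. pose proof (hs_inner_add_l X x (hs_opp x) y) as H.
  rewrite hs_add_opp, inner_zero_l in H. lra. Qed.

Lemma inner_add_r {X : HilbertSpace} (x y z : X) : hs_inner z (hs_add x y) = hs_inner z x + hs_inner z y.
Proof. rewrite !(hs_inner_sym X z). apply hs_inner_add_l. Qed.
Lemma inner_opp_r {X : HilbertSpace} (x y : X) : hs_inner y (hs_opp x) = - hs_inner y x.
Proof. rewrite !(hs_inner_sym X y). apply inner_opp_l. Qed.
Lemma inner_scal_r {X : HilbertSpace} a (x y : X) : hs_inner y (hs_scal a x) = a * hs_inner y x.
Proof. rewrite !(hs_inner_sym X y). apply hs_inner_scal_l. Qed.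
Lemma inner_zero_r {X : HilbertSpace} (y : X) : hs_inner y hs_zero = 0.
Proof. rewrite hs_inner_sym. apply inner_zero_l. Qed.

Ltac vexp := unfold hs_sub; repeat rewrite ?hs_inner_add_l, ?inner_opp_l, ?hs_inner_scal_l, ?inner_zero_l.
Ltac vexp2 := unfold hs_sub; repeat rewrite ?hs_inner_add_l, ?inner_opp_l, ?hs_inner_scal_l, ?inner_zero_l,
   ?inner_add_r, ?inner_opp_r, ?inner_scal_r, ?inner_zero_r.

Lemma vec_eq {X : HilbertSpace} (x y : X) : (forall w, hs_inner x w = hs_inner y w) -> x = y.
Proof.
  intros H.
  assert (E : hs_sub x y = hs_zero).
  { apply hs_inner_def. set (w := hs_sub x y). unfold w at 1. vexp. rewrite H. ring. }
  assert (E2 : hs_add (hs_sub x y) y = x).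
  { unfold hs_sub. rewrite <- hs_add_assoc. rewrite (hs_add_comm X (hs_opp y) y).
    rewrite hs_add_opp. apply hs_add_zero. }
  rewrite <- E2, E. rewrite hs_add_comm. apply hs_add_zero.
Qed.

Ltac veq := apply vec_eq; intro; vexp; ring.

Lemma L1 {X : HilbertSpace} (a b : X) s :
  hs_inner (hs_add a (hs_scal s b)) (hs_add a (hs_scal s b)) =
  hs_inner a a + 2 * s * hs_inner a b + s^2 * hs_inner b b.
Proof. vexp2. rewrite (hs_inner_sym X b a). ring. Qed.

Lemma L2 {X : HilbertSpace} (a b : X) s r :
  hs_inner (hs_add (hs_scal s a) (hs_scal r b)) (hs_add (hs_scal s a) (hs_scal r b)) =
  s^2 * hs_inner a a + 2 * s * r * hs_inner a b + r^2 * hs_inner b b.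
Proof. vexp2. rewrite (hs_inner_sym X b a). ring. Qed.

Lemma norm_nonneg {X : HilbertSpace} (v : X) : 0 <= hs_norm v.
Proof. apply sqrt_pos. Qed.

Lemma norm_sq {X : HilbertSpace} (v : X) : hs_norm v * hs_norm v = hs_inner v v.
Proof. apply sqrt_sqrt, hs_inner_pos. Qed.

Lemma norm_le_of_sq {X : HilbertSpace} (v : X) b : 0 <= b -> hs_inner v v <= b * b -> hs_norm v <= b.
Proof. intros Hb H. rewrite <- norm_sq in H. pose proof (norm_nonneg v). nra. Qed.

Lemma sq_of_norm_le {X : HilbertSpace} (v : X) b : hs_norm v <= b -> hs_inner v v <= b * b.
Proof. intros H. rewrite <- norm_sq. pose proof (norm_nonneg v). nra. Qed.

Lemma CS {X : HilbertSpace} (a b : X) : hs_inner a b <= hs_norm a * hs_norm b.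
Proof.
  destruct (Req_dec (hs_inner b b) 0) as [H0|H0].
  - apply hs_inner_def in H0. subst b. rewrite inner_zero_r.
    pose proof (norm_nonneg a); pose proof (norm_nonneg (@hs_zero X)). nra.
  - pose proof (hs_inner_pos X b) as Hb.
    assert (Hb' : 0 < hs_inner b b) by lra.
    pose proof (hs_inner_pos X (hs_add a (hs_scal (- (hs_inner a b / hs_inner b b)) b))) as P.
    rewrite L1 in P.
    assert (Q : hs_inner a b * hs_inner a b <= hs_inner a a * hs_inner b b).
    { assert (P2 : 0 <= hs_inner b b * (hs_inner a a + 2 * - (hs_inner a b / hs_inner b b) * hs_inner a b +
        (- (hs_inner a b / hs_inner b b)) ^ 2 * hs_inner b b)) by (apply Rmult_le_pos; lra).
      replace (hs_inner b b * (hs_inner a a + 2 * - (hs_inner a b / hs_inner b b) * hs_inner a b +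
        (- (hs_inner a b / hs_inner b b)) ^ 2 * hs_inner b b)) with
        (hs_inner a a * hs_inner b b - hs_inner a b * hs_inner a b) in P2 by (field; lra).
      lra. }
    rewrite <- (norm_sq a), <- (norm_sq b) in Q.
    pose proof (norm_nonneg a); pose proof (norm_nonneg b).
    assert (0 <= hs_norm a * hs_norm b) by nra. nra.
Qed.

Lemma tri {X : HilbertSpace} (a b : X) : hs_norm (hs_add a b) <= hs_norm a + hs_norm b.
Proof.
  apply norm_le_of_sq. pose proof (norm_nonneg a); pose proof (norm_nonneg b); lra.
  vexp2. rewrite (hs_inner_sym X b a). pose proof (CS a b).
  rewrite <- (norm_sq a), <- (norm_sq b). nra.
Qed.

Lemma norm_scal_le {X : HilbertSpace} (a : X) t : 0 <= t -> hs_norm (hs_scal t a) <= t * hs_norm a.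
Proof.
  intros Ht. apply norm_le_of_sq. pose proof (norm_nonneg a); nra.
  vexp2. rewrite <- (norm_sq a). nra.
Qed.

Lemma norm_sub_sym {X : HilbertSpace} (a b : X) : hs_norm (hs_sub a b) = hs_norm (hs_sub b a).
Proof.
  unfold hs_norm. f_equal. assert (E : hs_sub a b = hs_scal (-1) (hs_sub b a)) by veq.
  rewrite E. vexp2. ring.
Qed.

Lemma J_fix {X : HilbertSpace} (A : X -> X -> Prop) J p b :
  is_resolvent A J -> A p hs_zero -> 0 < b -> J b p = p.
Proof.
  intros HJ Hp Hb. apply (proj2 (HJ b Hb p p)). exists hs_zero. split; auto. veq.
Qed.

Lemma J_nonexp {X : HilbertSpace} (A : X -> X -> Prop) J b (x y : X) :
  monotone_op A -> is_resolvent A J -> 0 < b ->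
  hs_norm (hs_sub (J b x) (J b y)) <= hs_norm (hs_sub x y).
Proof.
  intros Hm HJ Hb.
  destruct (proj1 (HJ b Hb x (J b x)) eq_refl) as [u [Hu Ex]].
  destruct (proj1 (HJ b Hb y (J b y)) eq_refl) as [v [Hv Ey]].
  pose proof (Hm _ _ _ _ Hu Hv) as M.
  assert (E : hs_sub x y = hs_add (hs_sub (J b x) (J b y)) (hs_scal b (hs_sub u v))).
  { rewrite Ex at 1. rewrite Ey at 1. veq. }
  unfold hs_norm at 2. rewrite E, L1. apply sqrt_le_1_alt.
  pose proof (hs_inner_pos X (hs_sub u v)). nra.
Qed.

Lemma rsum_nonneg f n : (forall i, 0 <= f i) -> 0 <= rsum f n.
Proof. intros H; induction n; simpl; [lra| pose proof (H n); lra]. Qed.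

Lemma rsum_split f a n : rsum f (a + n) = rsum f a + rsum (fun i => f (a + i)%nat) n.
Proof. induction n; simpl. rewrite Nat.add_0_r; ring. rewrite Nat.add_succ_r. simpl. rewrite IHn; ring. Qed.

Lemma rsum_mono f n m : (forall i, 0 <= f i) -> (n <= m)%nat -> rsum f n <= rsum f m.
Proof. intros H Hnm. induction Hnm. lra. simpl. pose proof (H m). lra. Qed.

Lemma comb_fix {X : HilbertSpace} (T : X -> X) (y z : X) t d :
  (forall a b, hs_norm (hs_sub (T a) (T b)) <= hs_norm (hs_sub a b)) ->
  0 <= t <= 1 ->
  hs_norm (hs_sub (T y) y) <= d -> hs_norm (hs_sub (T z) z) <= d ->
  let u := hs_add y (hs_scal t (hs_sub z y)) in
  hs_inner (hs_sub (T u) u) (hs_sub (T u) u) <= d * d + d * hs_norm (hs_sub z y).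
Proof.
  intros HT Ht Hy Hz u.
  set (a := hs_sub y (T u)). set (b := hs_sub z (T u)).
  assert (E1 : hs_sub (T u) u = hs_scal (-1) (hs_add (hs_scal (1 - t) a) (hs_scal t b)))
    by (unfold a, b, u; veq).
  assert (E2 : hs_sub y z = hs_add a (hs_scal (-1) b)) by (unfold a, b; veq).
  set (D := hs_norm (hs_sub z y)).
  assert (HD : hs_inner (hs_sub y z) (hs_sub y z) = D * D) by (unfold D; rewrite norm_sub_sym, norm_sq; auto).
  rewrite E2, L1 in HD.
  assert (Ha : hs_norm a <= d + t * D).
  { assert (Ea : a = hs_add (hs_sub y (T y)) (hs_sub (T y) (T u))) by (unfold a; veq).
    rewrite Ea. eapply Rle_trans. apply tri.
    rewrite norm_sub_sym. apply Rplus_le_compat. auto.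
    eapply Rle_trans. apply HT. rewrite norm_sub_sym.
    assert (Eu : hs_sub u y = hs_scal t (hs_sub z y)) by (unfold u; veq).
    rewrite Eu. apply norm_scal_le. lra. }
  assert (Hb : hs_norm b <= d + (1 - t) * D).
  { assert (Eb : b = hs_add (hs_sub z (T z)) (hs_sub (T z) (T u))) by (unfold b; veq).
    rewrite Eb. eapply Rle_trans. apply tri.
    rewrite norm_sub_sym. apply Rplus_le_compat. auto.
    eapply Rle_trans. apply HT.
    assert (Eu : hs_sub z u = hs_scal (1 - t) (hs_sub z y)) by (unfold u; veq).
    rewrite Eu. apply norm_scal_le. lra. }
  assert (d0 : 0 <= d). { pose proof (norm_nonneg (hs_sub (T y) y)); lra. }
  assert (D0 : 0 <= D) by apply norm_nonneg.
  apply sq_of_norm_le in Ha. apply sq_of_norm_le in Hb.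
  rewrite E1. vexp2. rewrite (hs_inner_sym X b a).
  set (AA := hs_inner a a) in *. set (BB := hs_inner b b) in *. set (AB := hs_inner a b) in *.
  match goal with |- ?L <= _ => assert (K : L = (1 - t) * AA + t * BB - t * (1 - t) * (D * D))
    by (rewrite <- HD; ring) end.
  rewrite K.
  assert (K1 : (1 - t) * AA <= (1 - t) * ((d + t * D) * (d + t * D))) by (apply Rmult_le_compat_l; lra).
  assert (K2 : t * BB <= t * ((d + (1 - t) * D) * (d + (1 - t) * D))) by (apply Rmult_le_compat_l; lra).
  assert (K3 : 4 * t * (1 - t) <= 1) by (pose proof (pow2_ge_0 (2*t-1)); nra).
  assert (K4 : 0 <= d * D) by (apply Rmult_le_pos; lra).
  assert (K5 : (4 * t * (1 - t)) * (d * D) <= 1 * (d * D)) by (apply Rmult_le_compat_r; lra).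
  assert (K6 : (1 - t) * ((d + t * D) * (d + t * D)) + t * ((d + (1 - t) * D) * (d + (1 - t) * D))
     - t * (1 - t) * (D * D) = d * d + (4 * t * (1 - t)) * (d * D)) by ring.
  lra.
Qed.

Lemma descent {X : HilbertSpace} (x0 y z : X) t :
  let u := hs_add y (hs_scal t (hs_sub z y)) in
  hs_inner (hs_sub x0 u) (hs_sub x0 u) =
  hs_inner (hs_sub x0 y) (hs_sub x0 y) - 2 * t * hs_inner (hs_sub x0 y) (hs_sub z y)
  + t ^ 2 * hs_inner (hs_sub z y) (hs_sub z y).
Proof.
  intros u. assert (E : hs_sub x0 u = hs_add (hs_sub x0 y) (hs_scal (- t) (hs_sub z y))) by (unfold u; veq).
  rewrite E, L1. ring.
Qed.

Lemma xbound {X : HilbertSpace} (A : X -> X -> Prop) (J : R -> X -> X)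
  (x0 : X) (alpha beta : nat -> R) (e : nat -> X) (x : nat -> X) (p : X) :
  monotone_op A -> is_resolvent A J -> (forall n, 0 < alpha n < 1) -> (forall n, 0 < beta n) ->
  HPPA J x0 alpha beta e x -> A p hs_zero ->
  forall n, hs_norm (hs_sub (x n) p) <= hs_norm (hs_sub x0 p) + rsum (fun i => hs_norm (e i)) n.
Proof.
  intros Hm HJ Hal Hbe [H0 HS] Hp n. induction n.
  - simpl. rewrite H0. lra.
  - rewrite HS. simpl.
    set (a := alpha n).
    assert (E : hs_sub (hs_add (hs_scal a x0) (hs_scal (1 - a) (hs_add (J (beta n) (x n)) (e n)))) p
       = hs_add (hs_scal a (hs_sub x0 p)) (hs_scal (1 - a) (hs_add (hs_sub (J (beta n) (x n)) (J (beta n) p)) (e n)))).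
    { rewrite (J_fix A J p (beta n) HJ Hp (Hbe n)). veq. }
    rewrite E. pose proof (Hal n) as Ha. fold a in Ha.
    eapply Rle_trans. apply tri.
    eapply Rle_trans. apply Rplus_le_compat; apply norm_scal_le; lra.
    pose proof (tri (hs_sub (J (beta n) (x n)) (J (beta n) p)) (e n)).
    pose proof (J_nonexp A J (beta n) (x n) p Hm HJ (Hbe n)).
    pose proof (rsum_nonneg (fun i => hs_norm (e i)) n (fun i => norm_nonneg _)).
    pose proof (norm_nonneg (e n)). pose proof (norm_nonneg (hs_sub x0 p)).
    set (B := hs_norm (hs_sub x0 p)) in *.
    set (S := rsum (fun i => hs_norm (e i)) n) in *.
    set (en := hs_norm (e n)) in *.
    assert (hs_norm (hs_add (hs_sub (J (beta n) (x n)) (J (beta n) p)) (e n)) <= B + S + en) by lra.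
    assert ((1 - a) * hs_norm (hs_add (hs_sub (J (beta n) (x n)) (J (beta n) p)) (e n)) <= (1-a) * (B + S + en))
      by (apply Rmult_le_compat_l; lra).
    nra.
Qed.

Lemma nat_mono_le h n m : nat_monotone h -> (n <= m)%nat -> (h n <= h m)%nat.
Proof. intros H Hnm. induction Hnm. lia. specialize (H m). lia. Qed.

Lemma inv_mono a b : (b <= a)%nat -> 1 / (INR a + 1) <= 1 / (INR b + 1).
Proof.
  intros H. unfold Rdiv. rewrite !Rmult_1_l. apply Rinv_le_contravar.
  pose proof (pos_INR b); lra. apply Rplus_le_compat_r, le_INR; auto.
Qed.

Lemma real_fix Nr mr d : 1 <= Nr -> 0 <= mr -> d = 1 / (24 * Nr * (mr + 1) ^ 2 + 1) ->
  d * d + d * (2 * Nr) <= (1 / (mr + 1)) * (1 / (mr + 1)).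
Proof.
  intros HN Hm Hd. set (q := (mr + 1) ^ 2).
  assert (Hq : 1 <= q) by (unfold q; nra).
  assert (Hd1 : d * (24 * Nr * q + 1) = 1) by (rewrite Hd; fold q; field; nra).
  assert (Hd0 : 0 < d) by (rewrite Hd; apply Rdiv_lt_0_compat; [lra| fold q; nra]).
  assert (Hdq : 0 <= d * (24 * Nr * q)) by (apply Rmult_le_pos; nra).
  assert (Hdle : d <= 1) by nra.
  assert (T : (1 / (mr + 1)) * (1 / (mr + 1)) = 1 / q) by (unfold q; field; lra).
  rewrite T.
  assert (A1 : d * d + d * (2 * Nr) <= 3 * Nr * d) by nra.
  assert (A2 : 3 * Nr * d * q <= 1) by nra.
  assert (A3 : 3 * Nr * d <= 1 / q).
  { apply (Rmult_le_reg_r q). lra. unfold Rdiv. rewrite Rmult_1_l, Rinv_l; lra. }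
  lra.
Qed.

Theorem mainTheorem4
  (X : HilbertSpace) (A : X -> X -> Prop) (J : R -> X -> X)
  (x0 : X) (alpha beta : nat -> R) (e : nat -> X) (x : nat -> X)
  (E chi1 : nat -> nat) (p : X) (N : nat) :
  maximal_monotone A ->
  (exists z : X, A z hs_zero) ->
  is_resolvent A J ->
  (forall n, 0 < alpha n < 1) ->
  (forall n, 0 < beta n) ->
  HPPA J x0 alpha beta e x ->
  nat_monotone E ->
  (forall k n : nat, rsum (fun i => hs_norm (e (E k + 1 + i)%nat)) n <= 1 / (INR k + 1)) ->
  nat_monotone chi1 ->
  (forall k n : nat, (chi1 k <= n)%nat -> hs_norm (hs_sub (J 1 (x n)) (x n)) <= 1 / (INR k + 1)) ->
  A p hs_zero ->
  2 * hs_norm (hs_sub x0 p) <= INR N ->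
  hs_norm (hs_sub x0 p) + 1 + rsum (fun i => hs_norm (e i)) (E 0%nat + 1) <= INR N ->
  forall (k : nat) (f : nat -> nat), nat_monotone f ->
    exists n : nat, (n <= psi N chi1 k f)%nat /\
      exists y : X, hs_norm (hs_sub y p) <= INR N /\
        hs_norm (hs_sub (J 1 y) y) <= 1 / (INR (f n) + 1) /\
        forall i : nat, (n <= i)%nat -> hs_inner (hs_sub x0 y) (hs_sub (x i) y) <= 1 / (INR k + 1).
Proof.
  intros [Hm _] _ HJ Hal Hbe HH _ HEq Hchi Hchi1 Hp HN1 HN2 k f Hf.
  set (Nr := INR N) in *.
  pose proof (rsum_nonneg (fun i => hs_norm (e i)) (E 0%nat + 1) (fun i => norm_nonneg _)) as Hs0.
  pose proof (norm_nonneg (hs_sub x0 p)) as Hx0p.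
  assert (HNr : 1 <= Nr) by lra.
  assert (HNn : (1 <= N)%nat).
  { destruct N. unfold Nr in HNr; simpl in HNr; lra. lia. }
  assert (XB : forall n, hs_norm (hs_sub (x n) p) <= Nr).
  { intros n. pose proof (xbound A J x0 alpha beta e x p Hm HJ Hal Hbe HH Hp n).
    pose proof (rsum_split (fun i => hs_norm (e i)) (E 0%nat + 1) n) as Sp.
    pose proof (HEq 0%nat n) as H1. simpl in H1. replace (1 / (0 + 1)) with 1 in H1 by field.
    pose proof (rsum_mono (fun i => hs_norm (e i)) n (E 0%nat + 1 + n) (fun i => norm_nonneg _)
      ltac:(lia)). lra. }
  assert (HT : forall a b, hs_norm (hs_sub (J 1 a) (J 1 b)) <= hs_norm (hs_sub a b))
    by (intros; apply (J_nonexp A); auto; lra).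
  assert (Tp : J 1 p = p) by (apply (J_fix A); auto; lra).
  set (g := fun m => f (chi1 m)).
  set (w := w_fun g N).
  set (ms := fun i => Nat.iter i w 0%nat).
  set (Rn := (4 * N ^ 4 * (k + 1) ^ 2)%nat).
  set (W := ms Rn).
  assert (Hpsi : psi N chi1 k f = chi1 (24 * N * (W + 1) ^ 2)%nat) by reflexivity.
  set (eps := 1 / (INR k + 1)).
  assert (Heps : 0 < eps <= 1).
  { unfold eps. pose proof (pos_INR k). split. apply Rdiv_lt_0_compat; lra.
    unfold Rdiv. rewrite Rmult_1_l. rewrite <- Rinv_1. apply Rinv_le_contravar; lra. }
  assert (Hw : forall m, (m <= w m)%nat /\ (24 * N * (m + 1) ^ 2 <= w m)%nat /\ (g (24 * N * (m + 1) ^ 2) <= w m)%nat).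
  { intros m. unfold w, w_fun. split; [|split; [apply Nat.le_max_r | apply Nat.le_max_l]].
    eapply Nat.le_trans; [|apply Nat.le_max_r]. rewrite Nat.pow_2_r; nia. }
  assert (Hms : forall i j, (i <= j)%nat -> (ms i <= ms j)%nat).
  { intros i j Hij. induction Hij. lia. eapply Nat.le_trans. apply IHHij. simpl. apply Hw. }
  set (Good := fun m y => hs_norm (hs_sub y p) <= Nr /\
     hs_norm (hs_sub (J 1 y) y) <= 1 / (INR (g (24 * N * (m + 1) ^ 2)%nat) + 1) /\
     forall z, hs_norm (hs_sub z p) <= Nr -> hs_norm (hs_sub (J 1 z) z) <= 1 / (INR (24 * N * (m + 1) ^ 2)%nat + 1) ->
       hs_inner (hs_sub x0 y) (hs_sub z y) <= eps).
  set (phi := fun y => hs_inner (hs_sub x0 y) (hs_sub x0 y)).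
  set (dd := eps ^ 2 / (4 * Nr ^ 2)).
  assert (key : forall j, (j <= Rn + 1)%nat ->
     (exists m, (m <= W)%nat /\ exists y, Good m y) \/
     exists y, hs_norm (hs_sub y p) <= Nr /\ hs_norm (hs_sub (J 1 y) y) <= 1 / (INR (ms (Rn + 1 - j)%nat) + 1)
        /\ phi y <= phi p - INR j * dd).
  { induction j as [|j IH]; intros Hj.
    - right. exists p. split. unfold hs_sub. rewrite hs_add_opp. unfold hs_norm. rewrite inner_zero_l, sqrt_0. lra.
      split. rewrite Tp. unfold hs_sub. rewrite hs_add_opp. unfold hs_norm. rewrite inner_zero_l, sqrt_0.
      apply Rlt_le, Rdiv_lt_0_compat. lra. pose proof (pos_INR (ms (Rn + 1 - 0)%nat)); lra.
      simpl. lra.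
    - destruct (IH ltac:(lia)) as [L|[y [Hyp [HyT Hyphi]]]]. left; exact L.
      replace (Rn + 1 - j)%nat with (S (Rn - j)%nat) in HyT by lia.
      replace (Rn + 1 - S j)%nat with (Rn - j)%nat by lia.
      change (ms (S (Rn - j)%nat)) with (w (ms (Rn - j)%nat)) in HyT.
      set (m := ms (Rn - j)%nat) in *.
      set (M := (24 * N * (m + 1) ^ 2)%nat) in *.
      destruct (Hw m) as [Hw1 [Hw2 Hw3]].
      destruct (classic (forall z, hs_norm (hs_sub z p) <= Nr -> hs_norm (hs_sub (J 1 z) z) <= 1 / (INR M + 1) ->
       hs_inner (hs_sub x0 y) (hs_sub z y) <= eps)) as [C|C].
      + left. exists m. split. apply Hms; lia. exists y. split; auto. split; auto.
        eapply Rle_trans. apply HyT. apply inv_mono. auto.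
      + right. apply not_all_ex_not in C. destruct C as [z C].
        apply imply_to_and in C. destruct C as [Hzp C].
        apply imply_to_and in C. destruct C as [HzT C]. apply Rnot_le_lt in C.
        set (t := eps / (4 * Nr ^ 2)).
        assert (Ht : 0 <= t <= 1).
        { unfold t. split. apply Rlt_le, Rdiv_lt_0_compat; nra.
          apply (Rmult_le_reg_r (4 * Nr ^ 2)). nra. unfold Rdiv. rewrite Rmult_assoc, Rinv_l; nra. }
        exists (hs_add y (hs_scal t (hs_sub z y))).
        assert (Hzy : hs_norm (hs_sub z y) <= 2 * Nr).
        { assert (Ez : hs_sub z y = hs_add (hs_sub z p) (hs_sub p y)) by veq.
          rewrite Ez. eapply Rle_trans. apply tri. rewrite (norm_sub_sym p y). lra. }
        split; [|split].
        * assert (Eu : hs_sub (hs_add y (hs_scal t (hs_sub z y))) p =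
             hs_add (hs_scal (1 - t) (hs_sub y p)) (hs_scal t (hs_sub z p))) by veq.
          rewrite Eu. eapply Rle_trans. apply tri.
          eapply Rle_trans. apply Rplus_le_compat; apply norm_scal_le; lra. nra.
        * set (d := 1 / (INR M + 1)).
          assert (Hyd : hs_norm (hs_sub (J 1 y) y) <= d).
          { eapply Rle_trans. apply HyT. apply inv_mono. auto. }
          pose proof (comb_fix (J 1) y z t d HT Ht Hyd HzT) as CF. simpl in CF.
          apply norm_le_of_sq. apply Rlt_le, Rdiv_lt_0_compat. lra. pose proof (pos_INR m); lra.
          eapply Rle_trans. apply CF.
          assert (Hd0 : 0 <= d). { unfold d. apply Rlt_le, Rdiv_lt_0_compat. lra. pose proof (pos_INR M); lra. }
          eapply Rle_trans. apply Rplus_le_compat_l. apply Rmult_le_compat_l. exact Hd0. exact Hzy.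
          apply real_fix. lra. apply pos_INR.
          unfold d, M. rewrite !mult_INR, pow_INR, plus_INR. simpl (INR 1). simpl (INR 24).
          fold Nr. f_equal. f_equal. ring.
        * pose proof (descent x0 y z t) as De. simpl in De. unfold phi in *. rewrite De.
          rewrite S_INR.
          assert (Q : hs_inner (hs_sub z y) (hs_sub z y) <= (2 * Nr) * (2 * Nr)) by (apply sq_of_norm_le; auto).
          assert (Q2 : t ^ 2 * hs_inner (hs_sub z y) (hs_sub z y) <= t ^ 2 * ((2 * Nr) * (2 * Nr)))
            by (apply Rmult_le_compat_l; nra).
          assert (Q3 : 2 * t * eps <= 2 * t * hs_inner (hs_sub x0 y) (hs_sub z y))
            by (apply Rmult_le_compat_l; lra).
          assert (Q4 : - 2 * t * eps + t ^ 2 * ((2 * Nr) * (2 * Nr)) = - dd).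
          { unfold t, dd. field. lra. }
          lra. }
  destruct (key (Rn + 1)%nat ltac:(lia)) as [[m [HmW [y [G1 [G2 G3]]]]]|[y [_ [_ Hphi]]]].
  - set (M := (24 * N * (m + 1) ^ 2)%nat) in *.
    exists (chi1 M). split.
    + rewrite Hpsi. apply nat_mono_le; auto. unfold M.
      apply Nat.mul_le_mono_l. apply Nat.pow_le_mono_l. lia.
    + exists y. split; [exact G1|split; [exact G2|]].
      intros i Hi. apply G3. apply XB. apply Hchi1; auto.
  - exfalso.
    assert (P0 : 0 <= phi y) by apply hs_inner_pos.
    assert (P1 : phi p <= Nr ^ 2 / 4).
    { unfold phi. rewrite <- norm_sq. nra. }
    assert (P2 : INR (Rn + 1) * dd = Nr ^ 2 + dd).
    { unfold Rn, dd, eps. rewrite plus_INR, !mult_INR, !pow_INR, plus_INR. simpl (INR 1). simpl (INR 4).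
      fold Nr. field. pose proof (pos_INR k). split; lra. }
    assert (P3 : 0 < dd) by (unfold dd; apply Rdiv_lt_0_compat; nra).
    assert (Pc : 0 <= Nr ^ 2) by nra. rewrite P2 in Hphi. lra.
Qed.
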